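(* Assume Condition (C) and $\lambda/2<h<\lambda$. If $\eta\in\mathcal X$ contains a pair of nearest-neighbour sites $i,j\in\Lambda$ with $\eta(i)=+1$, $\eta(j)=-1$, then there is a downhill path (one along which $H$ is non-increasing) from $\eta$ to a configuration $\eta'$ with $H(\eta')<H(\eta)$; in particular $V_\eta=0$.
   Context: Let $\Lambda=\{1,\dots,L\}^2$, $\mathcal X=\{-1,0,+1\}^\Lambda$, $\partial^-\Lambda$ the sites of $\Lambda$ with a nearest neighbour outside $\Lambda$. Hamiltonian: $H(\eta)=\frac J2\sum_{i,j\in\Lambda,|i-j|=1}[\eta(i)-\eta(j)]^2+J\sum_{i\in\partial^-\Lambda}\sum_{j\notin\Lambda,|i-j|=1}\eta(i)^2-\lambda\sum_{i}\eta(i)^2-h\sum_i\eta(i)$. Condition (C): $J$ sufficiently large compared to $\lambda,h>0$; $L>(2J/(\lambda-h))^3$; none of $\tfrac{2J}{\lambda+h},\tfrac{2J}{\lambda-h},\tfrac{2J+\lambda-h}{\lambda+h},\tfrac{J+\lambda+h}{h}$ is an integer. A path is a sequence of configurations with consecutive ones differing at exactly one site. $V_\eta=\Phi(\eta,\{\zeta:H(\zeta)<H(\eta)\})-H(\eta)$ where $\Phi(\eta,A)$ is the minimal over paths from $\eta$ to $A$ of the maximum of $H$ along the path. *)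

(* Defs.v *)
From HB Require Import structures.
From mathcomp Require Import all_boot all_order all_algebra.
From mathcomp Require Import boolp classical_sets reals.
Set Implicit Arguments. Unset Strict Implicit. Unset Printing Implicit Defensive.
Import Order.TTheory GRing.Theory Num.Theory.
Local Open Scope ring_scope.

(* Sites of Lambda = {1..L}^2 are represented by 'I_L * 'I_L, embedded in Z^2
   via (a,b) |-> (a+1, b+1). *)
Definition site (L : nat) := ('I_L * 'I_L)%type.

Definition emb (L : nat) (i : site L) : int * int :=
  ((nat_of_ord i.1).+1%:Z, (nat_of_ord i.2).+1%:Z).

Definition nbrs4 (x : int * int) : seq (int * int) :=
  [:: (x.1 + 1, x.2); (x.1 - 1, x.2); (x.1, x.2 + 1); (x.1, x.2 - 1)].

Definition inLam (L : nat) (x : int * int) : bool :=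
  [&& (1 <= x.1)%R, (x.1 <= L%:Z)%R, (1 <= x.2)%R & (x.2 <= L%:Z)%R].

Definition nbr (L : nat) (i j : site L) : bool := emb j \in nbrs4 (emb i).

(* spin values {-1,0,+1} encoded by 'I_3 via s |-> s - 1 *)
Definition spinv (R : nzRingType) (s : 'I_3) : R := (nat_of_ord s)%:R - 1.

Definition config (L : nat) := {ffun site L -> 'I_3}.

Definition H (R : realFieldType) (J lam h : R) (L : nat) (eta : config L) : R :=
  J / 2 * (\sum_(i : site L) \sum_(j : site L | nbr i j)
              (spinv R (eta i) - spinv R (eta j)) ^+ 2)
  + J * (\sum_(i : site L)
           (count (fun y => ~~ inLam L y) (nbrs4 (emb i)))%:R * spinv R (eta i) ^+ 2)
  - lam * (\sum_(i : site L) spinv R (eta i) ^+ 2)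
  - h * (\sum_(i : site L) spinv R (eta i)).

Definition adj (L : nat) (x y : config L) : bool := #|[set i | x i != y i]| == 1%N.

Definition is_path (L : nat) (eta : config L) (p : seq (config L)) : bool :=
  path (@adj L) eta p.

Definition path_max (R : realFieldType) (J lam h : R) (L : nat)
  (eta : config L) (p : seq (config L)) : R :=
  \big[Num.max/H J lam h eta]_(x <- p) H J lam h x.

Definition Phi (R : realType) (J lam h : R) (L : nat)
  (eta : config L) (A : set (config L)) : R :=
  inf [set m | exists p : seq (config L),
         [/\ is_path eta p, A (last eta p) & m = path_max J lam h eta p]].

Definition V (R : realType) (J lam h : R) (L : nat) (eta : config L) : R :=
  Phi J lam h eta [set z | H J lam h z < H J lam h eta] - H J lam h eta.

Definition downhill (R : realFieldType) (J lam h : R) (L : nat)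
  (eta : config L) (p : seq (config L)) : bool :=
  is_path eta p && path (fun x y => H J lam h y <= H J lam h x) eta p.

Definition not_integer (R : realFieldType) (x : R) : Prop :=
  ~ exists n : int, x = n%:~R.

(* the arithmetic part of Condition (C) (the "J sufficiently large" part is
   expressed by an existential threshold in the theorem) *)
Definition condC_arith (R : realFieldType) (J lam h : R) (L : nat) : Prop :=
  [/\ (2 * J / (lam - h)) ^+ 3 < L%:R,
      not_integer (2 * J / (lam + h)),
      not_integer (2 * J / (lam - h)),
      not_integer ((2 * J + lam - h) / (lam + h))
    & not_integer ((J + lam + h) / h)].

(* Main.v *)
Require Import Defs.
From HB Require Import structures.
From mathcomp Require Import all_boot all_order all_algebra.
From mathcomp Require Import boolp classical_sets reals.
From mathcomp Require Import zify ring lra.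
Import Order.TTheory GRing.Theory Num.Theory.
Local Open Scope ring_scope.

Lemma nbr_sym L (i j : site L) : nbr i j = nbr j i.
Proof.
rewrite /nbr /emb /nbrs4 /= !inE !xpair_eqE.
case: i j => [[a ha] [b hb]] [[c hc] [d hd]] /=.
apply/idP/idP; move=> H; lia.
Qed.
Lemma nbr_irr L (i : site L) : nbr i i = false.
Proof.
rewrite /nbr /emb /nbrs4 /= !inE !xpair_eqE.
apply/negbTE/negP => H; lia.
Qed.

Definition upd L (eta : config L) (a : site L) (v : 'I_3) : config L :=
  [ffun k => if k == a then v else eta k].

Arguments upd {L}.
Section DH.
Variable R : realFieldType.
Variable L : nat.

Lemma sum_upd (F : site L -> 'I_3 -> R) (eta : config L) (a : site L) (v : 'I_3) :
  \sum_i F i (upd eta a v i) = \sum_i F i (eta i) + F a v - F a (eta a).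
Proof.
rewrite (bigD1 a) //= [in RHS](bigD1 a) //= /upd ffunE eqxx.
rewrite (eq_bigr (fun i => F i (eta i))); last by move=> i /negbTE ia; rewrite ffunE ia.
ring.
Qed.

Lemma dsum_upd (g : 'I_3 -> 'I_3 -> R) (eta : config L) (a : site L) (v : 'I_3) :
  (forall x y, g x y = g y x) ->
  \sum_(i : site L) \sum_(j : site L | nbr i j) g (upd eta a v i) (upd eta a v j) =
  \sum_(i : site L) \sum_(j : site L | nbr i j) g (eta i) (eta j)
  + 2 * \sum_(j | nbr a j) (g v (eta j) - g (eta a) (eta j)).
Proof.
move=> gs.
have E : forall i j, nbr i j -> g (upd eta a v i) (upd eta a v j) =
   g (eta i) (eta j) + ((if i == a then g v (eta j) - g (eta a) (eta j) else 0)
      + (if j == a then g v (eta i) - g (eta a) (eta i) else 0)).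
  move=> i j nij; rewrite /upd !ffunE.
  case: (eqVneq i a) => [ia|ia]; case: (eqVneq j a) => [ja|ja].
  - by subst; rewrite nbr_irr in nij.
  - subst; ring.
  - subst; rewrite (gs (eta i) v) (gs (eta i) (eta a)); ring.
  - ring.
rewrite (eq_bigr (fun i => \sum_(j | nbr i j) (g (eta i) (eta j) + ((if i == a then g v (eta j) - g (eta a) (eta j) else 0)
      + (if j == a then g v (eta i) - g (eta a) (eta i) else 0))))); last first.
  by move=> i _; apply: eq_bigr => j; apply: E.
under eq_bigr => i _ do rewrite big_split /=.
rewrite big_split /=; congr (_ + _).
under eq_bigr => i _ do rewrite big_split /=.
rewrite big_split /= mulr2n mulrDl mul1r; congr (_ + _).
- rewrite (bigD1 a) //= eqxx [X in _ + X]big1 ?addr0 //.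
  by move=> i /negbTE ->; rewrite big1.
- rewrite [RHS]big_mkcond; apply: eq_bigr => i _.
  rewrite big_mkcond /= (bigD1 a) //= eqxx [X in _ + X]big1 ?addr0.
    by rewrite nbr_sym.
  by move=> j /negbTE ->; case: ifP.
Qed.

Definition bcount (i : site L) : nat := count (fun y => ~~ inLam L y) (nbrs4 (emb i)).

Lemma H_upd (J lam h : R) (eta : config L) (a : site L) (v : 'I_3) :
  H J lam h (upd eta a v) = H J lam h eta
   + J * \sum_(j | nbr a j) ((spinv R v - spinv R (eta j)) ^+ 2 - (spinv R (eta a) - spinv R (eta j)) ^+ 2)
   + J * (bcount a)%:R * (spinv R v ^+ 2 - spinv R (eta a) ^+ 2)
   - lam * (spinv R v ^+ 2 - spinv R (eta a) ^+ 2)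
   - h * (spinv R v - spinv R (eta a)).
Proof.
have D := dsum_upd (fun x y => (spinv R x - spinv R y) ^+ 2) eta a v.
have S1 := sum_upd (fun i x => (count (fun y => ~~ inLam L y) (nbrs4 (emb i)))%:R * spinv R x ^+ 2) eta a v.
have S2 := sum_upd (fun i x => spinv R x ^+ 2) eta a v.
have S3 := sum_upd (fun i x => spinv R x) eta a v.
cbv beta in D; cbv beta in S1; cbv beta in S2; cbv beta in S3.
rewrite /H D; last by move=> x y; rewrite -sqrrN opprB.
rewrite S1 S2 S3 /bcount.
set A := \sum_(i | _) _. set B := \sum_(j | _) _.
set C := \sum_i _. set D1 := \sum_i _. set E := \sum_i _.
rewrite mulrDr mulrA; by field.
Qed.
End DH.
Lemma emb_inj L : injective (@emb L).
Proof.
move=> [[a ha] [b hb]] [[c hc] [d hd]]; rewrite /emb /= => [[E1 E2]].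
have ac : a = c by lia.
have bd : b = d by lia.
subst; congr pair; apply: val_inj => //.
Qed.

Lemma card_nbr L (a : site L) : (#|[pred j | nbr a j]| <= 4)%N.
Proof.
rewrite cardE.
have U : uniq (map (@emb L) (enum [pred j | nbr a j])).
  by rewrite (map_inj_uniq (@emb_inj L)) enum_uniq.
rewrite -(size_map (@emb L)).
have -> : 4%N = size (nbrs4 (emb a)) by [].
apply: uniq_leq_size U _ => x /mapP [j]; rewrite mem_enum inE => hj ->.
exact: hj.
Qed.

Lemma sum_le_card (R : realFieldType) (T : finType) (P : pred T) (t : T -> R) :
  (forall j, P j -> t j <= 1) -> \sum_(j | P j) t j <= #|P|%:R.
Proof.
move=> Ht; apply: (le_trans (ler_sum _ Ht)).
by rewrite sumr_const.
Qed.

Arguments bcount {L}.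
Arguments H_upd {R L}.
Arguments card_nbr {L}.
Arguments sum_le_card {R T}.
Lemma spin_cases (R : realFieldType) (s : 'I_3) :
  [\/ spinv R s = -1, spinv R s = 0 | spinv R s = 1].
Proof.
case: s => [[|[|[|m]]] hm] //; rewrite /spinv /=.
- by constructor 1; rewrite sub0r.
- by constructor 2; rewrite subrr.
- by constructor 3; rewrite -addrA (_ : 1 - 1 = 0) ?subrr ?addr0 //.
Qed.

Lemma prod_cases (R : realFieldType) (x y : 'I_3) :
  [\/ spinv R x * spinv R y = -1, spinv R x * spinv R y = 0 | spinv R x * spinv R y = 1].
Proof.
case: (spin_cases R x) => [->|->|->]; case: (spin_cases R y) => [->|->|->];
  rewrite ?mul0r ?mulr0 ?mulN1r ?mulr1 ?mul1r ?opprK;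
  idtac.
all: try by apply: Or31.
all: try by apply: Or32.
all: try by apply: Or33.
Qed.

Lemma prodN1_sq (R : realFieldType) (x y : 'I_3) :
  spinv R x * spinv R y = -1 -> spinv R x ^+ 2 = 1.
Proof.
case: (spin_cases R x) => [->|->|->]; rewrite ?mul0r.
- by rewrite sqrrN expr1n.
- by move=> /eqP; rewrite eq_sym oppr_eq0 oner_eq0.
- by rewrite expr1n.
Qed.

Definition z3 : 'I_3 := Ordinal (isT : (1 < 3)%N).

Lemma spin_z3 (R : realFieldType) : spinv R z3 = 0.
Proof. by rewrite /spinv /= subrr. Qed.

Lemma flip_good (R : realFieldType) (L : nat) (J lam h : R) (eta : config L) (a a' : site L) :
  0 < lam -> 0 < h -> lam + h < J ->
  nbr a a' -> spinv R (eta a) * spinv R (eta a') = -1 ->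
  (0 < bcount a)%N \/ (exists k, [/\ nbr a k, k != a' & spinv R (eta a) * spinv R (eta k) != 1]) ->
  H J lam h (upd eta a z3) < H J lam h eta.
Proof.
move=> lp hp hJ naa' paa' Hor.
rewrite H_upd spin_z3.
have s2 := @prodN1_sq R _ _ paa'.
set s := spinv R (eta a).
have tE : forall j, (0 - spinv R (eta j)) ^+ 2 - (s - spinv R (eta j)) ^+ 2 = 2 * (s * spinv R (eta j)) - 1.
  move=> j; have -> : (0 - spinv R (eta j)) ^+ 2 - (s - spinv R (eta j)) ^+ 2 = 2 * (s * spinv R (eta j)) - s ^+ 2 by ring.
  by rewrite s2.
under eq_bigr => j _ do rewrite tE.
have tle : forall j, 2 * (s * spinv R (eta j)) - 1 <= 1.
  by move=> j; case: (prod_cases R (eta a) (eta j)) => ->; lra.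
have sh : h * s <= h.
  have : s = 1 \/ s = -1.
    move: s2; rewrite /s; case: (spin_cases R (eta a)) => [->|->|->] H0; [by right| |by left].
    by move: H0; rewrite expr0n /= => /eqP; rewrite eq_sym oner_eq0.
  by case=> ->; lra.
set b := (bcount a)%:R.
have b0 : 0 <= b by rewrite /b ler0n.
rewrite (bigD1 a') //= /s paa'.
have C1 : (#|[pred j | nbr a j && (j != a')]| <= 3)%N.
  have := card_nbr a; rewrite (cardD1 a') inE naa' add1n ltnS.
  by rewrite (eq_card (B := [pred j | nbr a j && (j != a')])) // => j; rewrite !inE andbC.
set t := fun j => 2 * (spinv R (eta a) * spinv R (eta j)) - 1.
have T : \sum_(j | nbr a j && (j != a')) t j - b <= 2.
  case: Hor => [bp|[k [nak ka' sk]]].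
  - have b1 : 1 <= b by rewrite /b ler1n.
    have h2 := sum_le_card (fun j => nbr a j && (j != a')) t (fun j _ => tle j).
    have h1 : (#|[pred j | nbr a j && (j != a')]|%:R <= 3 :> R) by rewrite ler_nat.
    move: h2; rewrite -/(#|[pred j | nbr a j && (j != a')]|) => h2.
    lra.
  - rewrite (bigD1 k) /=; last by rewrite nak ka'.
    have tk : t k <= -1.
      by move: sk; rewrite /t; case: (prod_cases R (eta a) (eta k)) => -> //; rewrite ?eqxx //; lra.
    have h2 := sum_le_card (fun j => (nbr a j && (j != a')) && (j != k)) t (fun j _ => tle j).
    have C2 : (#|[pred j | (nbr a j && (j != a')) && (j != k)]| <= 2)%N.
      move: C1; rewrite (cardD1 k) inE nak ka' add1n ltnS.
      by rewrite (eq_card (B := [pred j | (nbr a j && (j != a')) && (j != k)])) // => j; rewrite !inE andbC.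
    have h1 : (#|[pred j | (nbr a j && (j != a')) && (j != k)]|%:R <= 2 :> R) by rewrite ler_nat.
    lra.
move: T; set X := \sum_(j | _) t j => T.
rewrite s2 expr0n /=.
have J0 : 0 <= J by lra.
have hX : X - b - 3 <= -1 by lra.
have M' := ler_wpM2l J0 hX.
move: sh; rewrite /s => sh.
set HH := H _ _ _ _.
lra.
Qed.

Lemma lift_site L (p : int * int) : inLam L p -> exists k : site L, emb k = p.
Proof.
case: p => [x y]; rewrite /inLam /= => /and4P [h1 h2 h3 h4].
have hx : (`|x|.-1 < L)%N by lia.
have hy : (`|y|.-1 < L)%N by lia.
exists (Ordinal hx, Ordinal hy); rewrite /emb /=; congr pair; lia.
Qed.

Definition wt L (p : site L * site L) : nat := (p.1.1 + p.1.2 + p.2.1 + p.2.2)%N.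

Arguments wt {L}.

Lemma geom L (a a' : site L) :
  nbr a a' -> (count (fun y => ~~ inLam L y) (nbrs4 (emb a)) = 0)%N ->
  (count (fun y => ~~ inLam L y) (nbrs4 (emb a')) = 0)%N ->
  exists k k', [/\ nbr a k, k != a', nbr a' k', k' != a & nbr k k' /\ (wt (a, a') < wt (k, k'))%N].
Proof.
move=> naa' /eqP c1 /eqP c2.
rewrite -(negbK (_ == 0)%N) -lt0n -has_count has_predC negbK in c1.
rewrite -(negbK (_ == 0)%N) -lt0n -has_count has_predC negbK in c2.
move/allP: c1 => c1; move/allP: c2 => c2.
have G : forall (f : int * int), f \in [:: (1%:Z, 0%:Z); (0%:Z, 1%:Z)] ->
   ((emb a).1 + f.1, (emb a).2 + f.2) \in nbrs4 (emb a) ->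
   ((emb a').1 + f.1, (emb a').2 + f.2) \in nbrs4 (emb a') ->
   ((emb a').1 + f.1, (emb a').2 + f.2) \in nbrs4 ((emb a).1 + f.1, (emb a).2 + f.2) ->
   ((emb a).1 + f.1, (emb a).2 + f.2) != emb a' ->
   ((emb a').1 + f.1, (emb a').2 + f.2) != emb a ->
   exists k k', [/\ nbr a k, k != a', nbr a' k', k' != a & nbr k k' /\ (wt (a, a') < wt (k, k'))%N].
  move=> f hf m1 m2 m3 n1 n2.
  have [k ek] := @lift_site L _ (c1 _ m1).
  have [k' ek'] := @lift_site L _ (c2 _ m2).
  exists k, k'; split.
  - by rewrite /nbr ek.
  - by apply: contraNneq n1 => E; rewrite -ek E.
  - by rewrite /nbr ek'.
  - by apply: contraNneq n2 => E; rewrite -ek' E.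
  - split; first by rewrite /nbr ek ek'.
    move: hf ek ek'; clear m1 m2 m3 n1 n2 naa' c1 c2; rewrite !inE /wt /emb.
    case: k k' a a' => [[k1 ?] [k2 ?]] [[l1 ?] [l2 ?]] [[a1 ?] [a2 ?]] [[b1 ?] [b2 ?]] /=.
    case/orP => /eqP -> [E1 E2] [E3 E4]; lia.
move: naa'; rewrite /nbr.
clear c1 c2; case: a a' G => [[a1 ha1] [a2 ha2]] [[b1 hb1] [b2 hb2]].
rewrite /emb /nbrs4 /= => G.
rewrite !inE !xpair_eqE => E.
case/or4P: E => /andP [/eqP E1 /eqP E2].
- apply: (G (0%:Z, 1%:Z)); rewrite ?inE ?xpair_eqE /=; lia.
- apply: (G (0%:Z, 1%:Z)); rewrite ?inE ?xpair_eqE /=; lia.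
- apply: (G (1%:Z, 0%:Z)); rewrite ?inE ?xpair_eqE /=; lia.
- apply: (G (1%:Z, 0%:Z)); rewrite ?inE ?xpair_eqE /=; lia.
Qed.

Lemma exists_good (R : realFieldType) L (eta : config L) (i j : site L) :
  nbr i j -> spinv R (eta i) * spinv R (eta j) = -1 ->
  exists c c', [/\ nbr c c', spinv R (eta c) * spinv R (eta c') = -1 &
    (0 < bcount c)%N \/ (exists k, [/\ nbr c k, k != c' & spinv R (eta c) * spinv R (eta k) != 1])].
Proof.
move=> nij pij.
pose P := fun p : site L * site L => nbr p.1 p.2 && (spinv R (eta p.1) * spinv R (eta p.2) == -1).
have P0 : P (i, j) by rewrite /P /= nij pij eqxx.
case: (@arg_maxnP _ (i, j) P wt P0) => [[a a'] /andP [/= naa' /eqP paa'] Hmax].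
have na'a : nbr a' a by rewrite nbr_sym.
have pa'a : spinv R (eta a') * spinv R (eta a) = -1 by rewrite mulrC.
case: (ltnP 0 (bcount a)) => [ba|ba].
  by exists a, a'; split => //; left.
case: (boolP [exists k, [&& nbr a k, k != a' & spinv R (eta a) * spinv R (eta k) != 1]]) => [/existsP [k /and3P [h1 h2 h3]]|nk].
  by exists a, a'; split => //; right; exists k.
case: (ltnP 0 (bcount a')) => [ba'|ba'].
  by exists a', a; split => //; left.
case: (boolP [exists k, [&& nbr a' k, k != a & spinv R (eta a') * spinv R (eta k) != 1]]) => [/existsP [k /and3P [h1 h2 h3]]|nk'].
  by exists a', a; split => //; right; exists k.
exfalso.
have b0 : bcount a = 0%N by move: ba; rewrite leqn0 => /eqP.
have b0' : bcount a' = 0%N by move: ba'; rewrite leqn0 => /eqP.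
have [k [k' [nak ka' na'k' k'a [nkk' wlt]]]] := @geom L a a' naa' b0 b0'.
have e1 : spinv R (eta a) * spinv R (eta k) = 1.
  apply/eqP; apply: contraR nk => H1; apply/existsP; exists k; rewrite nak ka' H1.
  done.
have e2 : spinv R (eta a') * spinv R (eta k') = 1.
  apply/eqP; apply: contraR nk' => H1; apply/existsP; exists k'; rewrite na'k' k'a H1.
  done.
have Pk : P (k, k').
  rewrite /P /= nkk' /=; apply/eqP.
  have : (spinv R (eta a) * spinv R (eta a')) * (spinv R (eta k) * spinv R (eta k')) = 1.
    by rewrite mulrACA e1 e2 mulr1.
  by rewrite paa' mulN1r => /eqP; rewrite eqr_oppLR => /eqP.
have := Hmax _ Pk; rewrite leqNgt; by rewrite wlt.
Qed.

Lemma pm_ge (R : realType) (J lam h : R) L (eta : config L) (p : seq (config L)) :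
  H J lam h eta <= path_max J lam h eta p.
Proof.
rewrite /path_max; elim: p => [|x p IH]; first by rewrite big_nil.
by rewrite big_cons le_max IH orbT.
Qed.

Theorem lemma4p1 (R : realType) (lam h : R) :
  0 < lam -> 0 < h -> lam / 2 < h -> h < lam ->
  exists J0 : R, forall J : R, J0 < J ->
  forall L : nat, condC_arith J lam h L ->
  forall eta : config L,
    (exists i j : site L, [/\ nbr i j, spinv R (eta i) = 1 & spinv R (eta j) = -1]) ->
    (exists p : seq (config L),
        downhill J lam h eta p /\ H J lam h (last eta p) < H J lam h eta)
    /\ V J lam h eta = 0.
Proof.
move=> lp hp _ _; exists (lam + h) => J hJ L _ eta [i [j [nij si sj]]].
have pij : spinv R (eta i) * spinv R (eta j) = -1 by rewrite si sj mul1r.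
have [c [c' [ncc' pcc' Hor]]] := @exists_good R L eta i j nij pij.
have Hlt := @flip_good R L J lam h eta c c' lp hp hJ ncc' pcc' Hor.
set eta' := upd eta c z3 in Hlt.
have adjE : adj eta eta'.
  rewrite /adj (_ : [set k | eta k != eta' k] = [set c]) ?cards1 //.
  apply/setP => k; rewrite !inE /eta' /upd ffunE.
  case: (eqVneq k c) => [->|nkc]; last by rewrite eqxx.
  apply/eqP => E; have := @prodN1_sq R _ _ pcc'; rewrite E spin_z3 expr0n /=.
  by move/eqP; rewrite eq_sym oner_eq0.
have pm : path_max J lam h eta [:: eta'] = H J lam h eta.
  by rewrite /path_max big_cons big_nil max_r // ltW.
split.
  exists [:: eta']; split => //.
  by rewrite /downhill /is_path /= adjE /= (ltW Hlt).
rewrite /V /Phi; set S := (X in inf X).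
apply/eqP; rewrite subr_eq0 eq_le; apply/andP; split.
- have hlb : has_lbound S.
    exists (H J lam h eta) => m [p [_ _ ->]]; exact: pm_ge.
  apply: (ge_inf hlb); exists [:: eta']; split => //.
  by rewrite /is_path /= adjE.
- apply: lb_le_inf.
    exists (H J lam h eta), [:: eta']; split => //.
    by rewrite /is_path /= adjE.
  by move=> m [p [_ _ ->]]; exact: pm_ge.
Qed.
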